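(* Let $\mathcal M=(G,In,Out,Leak)$ be a strongly connected linear compartmental model with $|In|=|Out|=1$. Let $n$ be the number of compartments and $L$ the length of a shortest directed path in $G$ from the input compartment to the output compartment. In the input-output equation $\det(\partial I-A)y_i=(-1)^{i+j}\det((\partial I-A)^{j,i})u_j$ (with $In=\{j\}$, $Out=\{i\}$), the number of non-constant coefficients on the left-hand side is $n$ if $Leak\ne\emptyset$ and $n-1$ if $Leak=\emptyset$; the number of non-constant coefficients on the right-hand side is $n-1$ if $In=Out$ and $n-L$ if $In\ne Out$.
   Context: A linear compartmental model $\mathcal M=(G,In,Out,Leak)$ consists of a finite directed graph $G=(V_G,E_G)$ without multi-edges, compartments $V_G=\{1,\dots,n\}$, and subsets $In,Out,Leak\subseteq V_G$; edge $k\to \ell$ carries parameter $a_{\ell k}$ and each $\ell\in Leak$ carries $a_{0\ell}$ (independent indeterminates). The compartmental matrix $A$ has $A_{\ell\ell}=-\sum_{k:\,\ell\to k\in E_G}a_{k\ell}$ (minus $a_{0\ell}$ if $\ell\in Leak$), $A_{\ell k}=a_{\ell k}$ if $k\to\ell\in E_G$, $0$ otherwise. $B^{p,q}$ denotes $B$ with row $p$ and column $q$ removed, and $\partial I$ is the diagonal matrix with entries $d/dt$. The equation is viewed as a polynomial in $y_i,u_j$ and their derivatives, whose coefficients are polynomials in the parameters; ''non-constant'' refers to these polynomials. *)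

(* Defs.v *)
From HB Require Import structures.
From mathcomp Require Import all_boot all_order all_algebra.
From mathcomp Require Import mpoly.
Set Implicit Arguments. Unset Strict Implicit. Unset Printing Implicit Defensive.
Import GRing.Theory.
Local Open Scope ring_scope.

(* Compartments are 'I_n; the graph G is an edge relation e on 'I_n,
   with (e k l) meaning there is an edge k -> l.  The parameters
   a_{lk} (one for every ordered pair, used only for edges) and a_{0l}
   (leaks) are independent indeterminates of a multivariate polynomial
   ring over the rationals, indexed by the finite type par_t n. *)
Definition par_t (n : nat) := ('I_n * 'I_n + 'I_n)%type.
Definition nvar (n : nat) := #|{: par_t n}|.

(* a_{l k} : parameter of the edge k -> l *)
Definition edge_par n (l k : 'I_n) : {mpoly rat[nvar n]} :=
  'X_(enum_rank (inl (l, k) : par_t n)).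
Definition leak_par n (l : 'I_n) : {mpoly rat[nvar n]} :=
  'X_(enum_rank (inr l : par_t n)).

Definition compartmental_matrix n (e : rel 'I_n) (Leak : {set 'I_n})
  : 'M[{mpoly rat[nvar n]}]_n :=
  \matrix_(l, k)
    if l == k then
      - (\sum_(m | e l m) edge_par m l)
      - (if l \in Leak then leak_par l else 0)
    else if e k l then edge_par l k else 0.

(* det(dI - A), as a polynomial in d = d/dt with coefficients in the
   parameter ring: the characteristic polynomial char_poly A. *)
Definition io_rhs_poly n (A : 'M[{mpoly rat[nvar n]}]_n) (i j : 'I_n)
  : {poly {mpoly rat[nvar n]}} :=
  (-1) ^+ (i + j) * \det (row' j (col' i (char_poly_mx A))).

Definition nonconst k (p : {mpoly rat[k]}) : bool := p != (p@_0)%:MP_[k].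

Definition count_nonconst k (P : {poly {mpoly rat[k]}}) : nat :=
  count (fun m => nonconst P`_m) (iota 0 (size P)).

Definition strongly_connected n (e : rel 'I_n) : Prop :=
  forall x y : 'I_n, connect e x y.

Definition shortest_path_length n (e : rel 'I_n) (x y : 'I_n) (L : nat) : Prop :=
  (exists p : seq 'I_n, [/\ size p = L, path e x p & last x p = y]) /\
  (forall p : seq 'I_n, path e x p -> last x p = y -> (L <= size p)%N).

(* Main.v *)
Require Import Defs.
From HB Require Import structures.
From mathcomp Require Import all_boot all_order all_algebra.
From mathcomp Require Import mpoly.
From mathcomp Require Import fingroup perm.
From mathcomp Require Import lra zify.
Set Implicit Arguments. Unset Strict Implicit. Unset Printing Implicit Defensive.
Import Order.TTheory GRing.Theory Num.Theory.
Local Open Scope ring_scope.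

Lemma det_htrig (R : comNzRingType) n (M : 'M[R]_n) (h : 'I_n -> nat) :
  (forall l k, l != k -> M l k != 0 -> (h l < h k)%N) -> \det M = \prod_i M i i.
Proof.
move=> hM; rewrite /determinant (bigD1 (1%g : 'S_n)) //= [X in _ + X]big1 ?addr0.
  by rewrite odd_perm1 mul1r; apply: eq_bigr => i _; rewrite perm1.
move=> s s1.
have [i0 mi0] : exists i, s i != i.
  apply/existsP; apply: contraR s1 => /existsPn H; apply/eqP/permP => x.
  by rewrite perm1; apply/eqP; move: (H x); rewrite negbK.
case: (@arg_maxnP _ i0 (fun i => s i != i) h mi0) => i mi maxi.
rewrite (bigD1 i) //=.
suff -> : M i (s i) = 0 by rewrite mul0r mulr0.
apply/eqP; apply: contraT => nz.
have lt : (h i < h (s i))%N by apply: hM => //; rewrite eq_sym.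
have msi : s (s i) != s i by rewrite (inj_eq perm_inj).
have := maxi _ msi.
by move=> H; have := leq_trans lt H; rewrite ltnn.
Qed.
Lemma cpm_entry (R : comNzRingType) n (A : 'M[R]_n) l m :
  char_poly_mx A l m = 'X *+ (l == m) - (A l m)%:P.
Proof. by rewrite /char_poly_mx !mxE. Qed.

Lemma adj_rec (R : comNzRingType) n (A : 'M[R]_n) (l j : 'I_n) d :
  (\adj (char_poly_mx A) l j)`_d =
  \sum_m A l m * (\adj (char_poly_mx A) m j)`_d.+1
  + (l == j)%:R * (char_poly A)`_d.+1.
Proof.
set B := \adj _.
have H := congr1 (fun M : 'M[{poly R}]_n => (M l j)`_d.+1) (mul_mx_adj (char_poly_mx A)).
rewrite -/B /= mxE coef_sum [in RHS]mxE coefMn in H.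
have E : forall m, (char_poly_mx A l m * B m j)`_d.+1 = (B l j)`_d *+ (l==m) - A l m * (B m j)`_d.+1.
  move=> m; rewrite cpm_entry mulrBl coefB coefCM; congr (_ - _).
  by case: eqP => [<-|_]; rewrite ?mulr1n ?mulr0n ?coefXM ?mul0r ?coef0.
rewrite (eq_bigr _ (fun m _ => E m)) in H.
rewrite sumrB (bigD1 l) //= big1 ?addr0 in H; last first.
  by move=> m /negbTE; rewrite eq_sym => ->; rewrite mulr0n.
rewrite eqxx mulr1n in H.
rewrite /char_poly; case: (l == j) H; rewrite ?mulr1n ?mulr0n ?mul1r ?mul0r ?addr0 => H.
  by rewrite -H addrC subrK.
by apply/eqP; rewrite -subr_eq0 H.
Qed.

Lemma adj_coef0 (R : comNzRingType) n (e : rel 'I_n) (A : 'M[R]_n) (j : 'I_n) :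
  (forall l m, l != m -> ~~ e m l -> A l m = 0) ->
  forall l d, (forall p, path e j p -> last j p = l -> (n <= d + size p)%N) ->
  (\adj (char_poly_mx A) l j)`_d = 0.
Proof.
move=> hA.
set B := \adj _.
pose D := (\max_m size (B m j))%N.
suff H : forall k l d, (D <= d + k)%N ->
    (forall p, path e j p -> last j p = l -> (n <= d + size p)%N) -> (B l j)`_d = 0.
  by move=> l d; apply: (H D); rewrite leq_addl.
elim=> [|k IH] l d hD hC.
  apply: nth_default; rewrite addn0 in hD; apply: leq_trans hD.
  exact: (@leq_bigmax _ (fun m => size (B m j)) l).
rewrite /B adj_rec -/B big1 ?add0r.
  case: eqP => [lj|_]; last by rewrite mul0r.
  have := hC [::] erefl (esym lj); rewrite addn0 => nd.
  by rewrite nth_default ?mulr0 // size_char_poly.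
move=> m _; case: (eqVneq l m) => [<-|lm].
  rewrite IH ?mulr0 //; first by rewrite addSnnS.
  by move=> p pp lp; apply: leq_trans (hC p pp lp) _; rewrite leq_add2r.
case em: (e m l); last by rewrite hA ?em // mul0r.
rewrite IH ?mulr0 //; first by rewrite addSnnS.
move=> p pp lp; have := hC (rcons p l).
rewrite rcons_path pp lp em last_rcons size_rcons addnS addSn; apply => //.
Qed.

Section Tree.
Variables (n : nat) (r : 'I_n) (par : 'I_n -> 'I_n) (h : 'I_n -> nat).
Hypothesis hpar : forall k, k != r -> h k = (h (par k)).+1.
Hypothesis hr : h r = 0%N.

Definition tmx (c : rat) : 'M[rat]_n :=
  \matrix_(l, k) if l == k then (if l == r then - c else -1)
                 else if (k != r) && (par k == l) then 1 else 0.

Lemma par_neq k : k != r -> par k != k.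
Proof.
move=> kr; apply/eqP => pk; have := hpar kr; rewrite pk => /eqP.
by rewrite -[X in X == _]addn0 -addn1 eqn_add2l.
Qed.

Lemma cpm_tmx c m k : char_poly_mx (tmx c) m k =
  if m == k then 'X + (if k == r then c else 1)%:P
  else if (k != r) && (par k == m) then -1 else 0.
Proof.
rewrite cpm_entry mxE; case: eqP => [->|_]; rewrite ?mulr1n ?mulr0n.
  by case: (k == r); rewrite ?polyCN ?opprK.
by case: ifP; rewrite ?sub0r ?polyC0 ?oppr0.
Qed.

Lemma char_poly_tmx c : char_poly (tmx c) = ('X + c%:P) * ('X + 1) ^+ n.-1.
Proof.
rewrite /char_poly (@det_htrig _ _ _ h).
  rewrite (bigD1 r) //=; congr (_ * _); first by rewrite cpm_tmx !eqxx.
  rewrite (eq_bigr (fun _ => 'X + 1)); last first.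
    by move=> i /negbTE ir; rewrite cpm_tmx eqxx ir.
  by rewrite prodr_const cardC1 card_ord.
move=> l k /negbTE lk; rewrite cpm_tmx lk.
case: ifP => [/andP[kr /eqP <-] _|]; last by rewrite eqxx.
by rewrite (hpar kr).
Qed.

Lemma adj_tmx k : \adj (char_poly_mx (tmx 0)) r k * ('X + 1) ^+ h k = ('X + 1) ^+ n.-1.
Proof.
set B := \adj _.
have key : forall k, \sum_m B r m * char_poly_mx (tmx 0) m k = (r == k)%:R * char_poly (tmx 0).
  move=> k'; have := congr1 (fun M : 'M[{poly rat}]_n => M r k') (mul_adj_mx (char_poly_mx (tmx 0))).
  by rewrite !mxE -/B mulr_natl => ->.
have Brr : B r r = ('X + 1) ^+ n.-1.
  have := key r; rewrite (bigD1 r) //= big1 ?addr0; last first.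
    by move=> m /negbTE mr; rewrite cpm_tmx mr eqxx andFb mulr0.
  rewrite cpm_tmx !eqxx mul1r char_poly_tmx addr0 [RHS]mulrC.
  by apply: mulIf; rewrite polyX_eq0.
have Bk : forall k, k != r -> B r k * ('X + 1) = B r (par k).
  move=> k' kr; have := key k'; rewrite eq_sym (negbTE kr) mul0r.
  rewrite (bigD1 k') //= (bigD1 (par k')) /=; last by rewrite par_neq.
  rewrite big1 ?addr0; last first.
    move=> m /andP[mk mp]; rewrite cpm_tmx (negbTE mk) kr /=.
    by rewrite eq_sym (negbTE mp) mulr0.
  rewrite !cpm_tmx eqxx (negbTE kr) (negbTE (par_neq kr)) eqxx /= polyC1.
  by rewrite mulrN1 => /eqP; rewrite subr_eq0 => /eqP.
move: {2}(h k) (erefl (h k)) => m; elim: m k => [|m IH] k hk.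
  case: (eqVneq k r) => [->|kr]; first by rewrite hr expr0 mulr1.
  by rewrite hpar in hk.
have kr : k != r by apply: contra_eqN hk => /eqP ->; rewrite hr.
have hp : h (par k) = m by move: hk; rewrite hpar // => -[].
by rewrite (hpar kr) exprS mulrA Bk // IH.
Qed.
End Tree.
Section Build.
Variables (n : nat) (e : rel 'I_n) (r : 'I_n).
Hypothesis hsc : forall x, connect e x r.

Definition plen (u : 'I_n) (m : nat) : bool :=
  [exists p : m.-tuple 'I_n, path e u p && (last u p == r)].

Lemma plenP u p : path e u p -> last u p = r -> plen u (size p).
Proof.
move=> pp lp; apply/existsP; exists (in_tuple p) => /=.
by rewrite pp lp eqxx.
Qed.

Lemma ex_plen u : exists m, plen u m.
Proof.
have /connectP [p pp lp] := hsc u.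
by exists (size p); apply: plenP.
Qed.

Definition hgt u := ex_minn (ex_plen u).

Lemma hgt_min u p : path e u p -> last u p = r -> (hgt u <= size p)%N.
Proof.
move=> pp lp; rewrite /hgt; case: ex_minnP => m _ H; apply: H.
exact: plenP.
Qed.

Lemma hgt_r : hgt r = 0%N.
Proof. by apply/eqP; rewrite -leqn0 (hgt_min (p := [::])). Qed.

Lemma hgt_step u : u != r -> exists x, e u x && ((hgt x).+1 == hgt u).
Proof.
move=> ur; have : plen u (hgt u) by rewrite /hgt; case: ex_minnP.
case/existsP => p /andP [pp /eqP lp].
case: p pp lp => [[|x p'] /= sz]; first by move=> _ lp; rewrite lp eqxx in ur.
move=> /andP[eux pp'] lp; exists x; rewrite eux /=.
have h1 : (hgt x <= size p')%N by apply: hgt_min.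
have h2 : (hgt u <= (hgt x).+1)%N.
  have : plen x (hgt x) by rewrite /hgt; case: ex_minnP.
  case/existsP => q /andP [qq /eqP lq].
  have := hgt_min (p := x :: q) (u := u); rewrite /= eux qq size_tuple; apply => //.
move/eqP: sz => sz.
by rewrite eqn_leq h2 andbT -sz ltnS.
Qed.

Definition tpar u := odflt u [pick x | e u x && ((hgt x).+1 == hgt u)].

Lemma tpar_spec u : u != r -> e u (tpar u) /\ hgt u = (hgt (tpar u)).+1.
Proof.
move=> ur; rewrite /tpar; case: pickP => [x /andP[eux /eqP hx] | none] /=.
  by split.
by have [x hx] := hgt_step ur; rewrite none in hx.
Qed.

End Build.

Definition tval n (r : 'I_n) (par : 'I_n -> 'I_n) (c : rat) : 'I_(nvar n) -> rat :=
  fun x => match enum_val x with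
           | inl lk => if (lk.2 != r) && (par lk.2 == lk.1) then 1 else 0
           | inr l => if l == r then c else 0
           end.

Lemma eval_edge n (v : 'I_(nvar n) -> rat) l k :
  (edge_par l k).@[v] = v (enum_rank (inl (l, k) : par_t n)).
Proof. by rewrite /edge_par mevalXU. Qed.

Lemma eval_leak n (v : 'I_(nvar n) -> rat) l :
  (leak_par l).@[v] = v (enum_rank (inr l : par_t n)).
Proof. by rewrite /leak_par mevalXU. Qed.

Lemma map_A_tree n (e : rel 'I_n) (Leak : {set 'I_n}) (r : 'I_n) (par : 'I_n -> 'I_n) c :
  (forall k, k != r -> e k (par k)) ->
  map_mx (meval (tval r par c)) (compartmental_matrix e Leak) =
  tmx r par (if r \in Leak then c else 0).
Proof.
move=> hp; apply/matrixP => l k; rewrite !mxE.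
case: ifP => [/eqP lk|lk].
  rewrite rmorphB rmorphN /= rmorph_sum /=.
  under eq_bigr => m _ do rewrite eval_edge /tval enum_rankK /=.
  rewrite (fun_if (meval _)) eval_leak /tval enum_rankK /= meval0.
  case: (eqVneq l r) => [->|lr] /=.
    by rewrite big1 ?oppr0 ?sub0r // => m _; rewrite andFb.
  rewrite (bigD1 (par l)) ?hp //= eqxx big1 ?addr0.
    by case: (l \in Leak); rewrite subr0.
  by move=> m /andP[_ /negbTE]; rewrite eq_sym => ->.
rewrite (fun_if (meval _)) eval_edge /tval enum_rankK /= meval0.
case: ifP => // ekl; case: ifP => // /andP[kr /eqP pk].
by move: (hp k kr); rewrite pk ekl.
Qed.

Lemma map_A_zero n (e : rel 'I_n) (Leak : {set 'I_n}) :
  map_mx (meval (fun _ : 'I_(nvar n) => 0 : rat)) (compartmental_matrix e Leak) = 0.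
Proof.
apply/matrixP => l k; rewrite !mxE.
case: eqP => _.
  rewrite rmorphB rmorphN /= rmorph_sum /= big1; last by move=> m _; rewrite eval_edge.
  by rewrite (fun_if (meval _)) eval_leak meval0 if_same oppr0 subr0.
by rewrite (fun_if (meval _)) eval_edge meval0 if_same.
Qed.

Lemma eval_coef_cp n (A : 'M[{mpoly rat[nvar n]}]_n) v k :
  ((char_poly A)`_k).@[v] = (char_poly (map_mx (meval v) A))`_k.
Proof. by rewrite -map_char_poly coef_map. Qed.

Lemma eval_coef_adj n (A : 'M[{mpoly rat[nvar n]}]_n) v i j k :
  ((\adj (char_poly_mx A) i j)`_k).@[v] = (\adj (char_poly_mx (map_mx (meval v) A)) i j)`_k.
Proof.
by rewrite -map_char_poly_mx -map_mx_adj [in RHS]mxE coef_map.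
Qed.

Lemma io_adj n (A : 'M[{mpoly rat[nvar n]}]_n) i j :
  io_rhs_poly A i j = \adj (char_poly_mx A) i j.
Proof. by rewrite /io_rhs_poly mxE /cofactor addnC. Qed.

Lemma nonconst_eval k (p : {mpoly rat[k]}) v0 v :
  p.@[v0] = 0 -> p.@[v] != 0 -> nonconst p.
Proof.
move=> h0 h1; apply/negP => /eqP hp.
by move: h1; rewrite hp mevalC -[X in X != _](mevalC v0) -hp h0 eqxx.
Qed.

Lemma nonconst0 k : nonconst (0 : {mpoly rat[k]}) = false.
Proof. by rewrite /nonconst mcoeff0 mpolyC0 eqxx. Qed.

Lemma nonconst1 k : nonconst (1 : {mpoly rat[k]}) = false.
Proof. by rewrite /nonconst mcoeff1 eqxx mpolyC1 eqxx. Qed.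

Lemma coefX1 m : forall d, 0 <= (('X + 1 : {poly rat}) ^+ m)`_d /\
  ((d <= m)%N -> 0 < (('X + 1 : {poly rat}) ^+ m)`_d).
Proof.
elim: m => [|m IH] d.
  rewrite expr0 coef1; split; first by case: (d == 0%N).
  by rewrite leqn0 => ->.
rewrite exprSr mulrDr mulr1 coefD coefMX.
case: (d =P 0%N) => [->|/eqP d0].
  by have [a0 a1] := IH 0%N; rewrite add0r; split => // _; apply: a1.
have [a0 a1] := IH d.
have [b0 b1] := IH d.-1.
split; first by apply: addr_ge0.
move=> dm; case: (leqP d m) => dm'.
  by have := a1 dm'; lra.
have : (d.-1 <= m)%N by rewrite -ltnS prednK // lt0n.
by move/b1; lra.
Qed.

Lemma coefX1_neq0 m d : (d <= m)%N -> (('X + 1 : {poly rat}) ^+ m)`_d != 0.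
Proof. by move=> dm; have [_ h] := coefX1 m d; rewrite gt_eqF ?h. Qed.

Lemma adj_X n (i k : 'I_n) :
  \adj (char_poly_mx (0 : 'M[rat]_n)) i k = if i == k then 'X ^+ n.-1 else 0.
Proof.
have cp0 : char_poly_mx (0 : 'M[rat]_n) = 'X%:M by rewrite /char_poly_mx map_mx0 subr0.
have H := congr1 (fun M : 'M[{poly rat}]_n => M i k) (mul_adj_mx (char_poly_mx (0 : 'M[rat]_n))).
rewrite cp0 /= mul_mx_scalar det_scalar mxE [in RHS]mxE in H.
rewrite cp0.
have n0 : n = n.-1.+1 by rewrite prednK // (leq_ltn_trans (leq0n i) (ltn_ord i)).
move: H; case: eqP => [<-|_]; rewrite ?mulr1n ?mulr0n.
  rewrite [in X in _ = X -> _]n0 exprS => H.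
  have nzX : ('X : {poly rat}) != 0 by rewrite polyX_eq0.
  exact: (mulfI nzX H).
by move=> H; apply/eqP; move: H => /eqP; rewrite mulf_eq0 polyX_eq0.
Qed.

Lemma cp0_coef n k : (k < n)%N -> (char_poly (0 : 'M[rat]_n))`_k = 0.
Proof.
move=> kn; rewrite /char_poly /char_poly_mx map_mx0 subr0 det_scalar coefXn.
by rewrite ltn_eqF.
Qed.

Lemma count_iota_all (a : pred nat) m k :
  (forall x, (m <= x < m + k)%N -> a x) -> count a (iota m k) = k.
Proof.
move=> h; rewrite -[RHS](size_iota m k); apply/eqP; rewrite -all_count.
by apply/allP => x; rewrite mem_iota; apply: h.
Qed.

Lemma detA_noleak n (e : rel 'I_n) : irreflexive e -> (0 < n)%N ->
  \det (compartmental_matrix e set0) = 0.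
Proof.
move=> irr n0; set A := compartmental_matrix e set0.
pose u : 'rV[{mpoly rat[nvar n]}]_n := const_mx 1.
have uA : u *m A = 0.
  apply/rowP => k; rewrite !mxE (bigD1 k) //= !mxE eqxx in_set0 subr0 mul1r.
  rewrite (eq_bigr (fun l => if e k l then edge_par l k else 0)); last first.
    by move=> l lk; rewrite !mxE (negbTE lk) mul1r.
  rewrite -big_mkcondr /=.
  rewrite [X in _ + X](eq_bigl (fun l => e k l)) ?addNr //.
  by move=> l; case: (eqVneq l k) => [->|lk]; rewrite ?irr.
have := congr1 (mulmx u) (mul_mx_adj A).
rewrite mulmxA uA mul0mx mul_mx_scalar => /rowP /(_ (Ordinal n0)).
by rewrite !mxE mulr1 => ->.
Qed.

Lemma sub_cpm n (A : 'M[{mpoly rat[nvar n]}]_n) (i : 'I_n) :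
  row' i (col' i (char_poly_mx A)) = char_poly_mx (row' i (col' i A)).
Proof.
apply/matrixP => a b; rewrite !mxE (inj_eq lift_inj).
by case: eqP.
Qed.



Unset Implicit Arguments.

Theorem corollary3p4 (n : nat) (e : rel 'I_n) (Leak : {set 'I_n}) (i j : 'I_n) :
  irreflexive e ->
  strongly_connected e ->
  let A := compartmental_matrix e Leak in
  [/\ count_nonconst (char_poly A) = (if Leak == set0 then n.-1 else n)%N,
      i = j -> count_nonconst (io_rhs_poly A i j) = n.-1
    & forall L : nat, i <> j -> shortest_path_length e j i L ->
        count_nonconst (io_rhs_poly A i j) = (n - L)%N].
Proof.
move=> irr sc A.
have n0 : (0 < n)%N := leq_ltn_trans (leq0n i) (ltn_ord i).
pose v0 := (fun _ : 'I_(nvar n) => 0 : rat).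
have A0 : map_mx (meval v0) A = 0 := map_A_zero e Leak.
have hsc : forall r x, connect e x r by move=> r x; apply: sc.
have tree : forall (r : 'I_n) c, map_mx (meval (tval r (tpar (hsc r)) c)) A =
    tmx r (tpar (hsc r)) (if r \in Leak then c else 0).
  by move=> r c; apply: map_A_tree => k kr; case: (tpar_spec (hsc r) kr).
have hpar : forall r k, k != r -> hgt (hsc r) k = (hgt (hsc r) (tpar (hsc r) k)).+1.
  by move=> r k kr; case: (tpar_spec (hsc r) kr).
have nzX1 : forall m, (('X + 1 : {poly rat}) ^+ m) != 0.
  by move=> m; rewrite expf_neq0 // -polyC1 monic_neq0 ?monicXaddC.
split.
- set P := char_poly A.
  have sP : size P = n.+1 := size_char_poly A.
  have Pn : P`_n = 1.
    by have := monicP (char_poly_monic A); rewrite /lead_coef -/P sP.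
  have ev0 : forall k, (k < n)%N -> (P`_k).@[v0] = 0.
    by move=> k kn; rewrite eval_coef_cp A0 cp0_coef.
  have ncL : forall k, (k < n)%N -> (0 < k)%N || (Leak != set0) -> nonconst P`_k.
    move=> k kn hk; case: (set_0Vmem Leak) => [L0 | [r rL]].
      rewrite L0 eqxx orbF in hk.
      apply: (nonconst_eval (v0:=v0) (v:=tval i (tpar (hsc i)) 0) (ev0 k kn)).
      rewrite eval_coef_cp tree L0 in_set0 (char_poly_tmx (hpar i)) polyC0 addr0.
      rewrite coefXM (gtn_eqF hk) coefX1_neq0 //.
      lia.
    apply: (nonconst_eval (v0:=v0) (v:=tval r (tpar (hsc r)) 1) (ev0 k kn)).
    rewrite eval_coef_cp tree rL (char_poly_tmx (hpar r)) polyC1 -exprS prednK //.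
    by rewrite coefX1_neq0 // ltnW.
  rewrite /count_nonconst sP -addn1 iotaD count_cat /= add0n Pn nonconst1 addn0.
  case: (set_0Vmem Leak) => [L0 | [r rL]].
    rewrite L0 eqxx.
    have P0 : P`_0 = 0.
      by rewrite /P char_poly_det /A L0 detA_noleak // mulr0.
    have -> : iota 0 n = 0%N :: iota 1 n.-1 by rewrite -{1}(prednK n0).
    rewrite /= P0 nonconst0 add0n addn0.
    apply: count_iota_all => x /andP[x1 xn]; apply: ncL => //.
      by move: xn; rewrite add1n prednK.
    by rewrite x1.
  have -> : (Leak == set0) = false.
    by apply: negbTE; apply/negP => /eqP L0; rewrite L0 in_set0 in rL.
  rewrite addn0.
  apply: count_iota_all => x /andP[_ xn]; apply: ncL => //.
  by apply/orP; right; apply/negP => /eqP L0; rewrite L0 in_set0 in rL.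
- move=> ij; subst j.
  rewrite io_adj.
  set P := \adj (char_poly_mx A) i i.
  have PE : P = char_poly (row' i (col' i A)).
    by rewrite /P mxE /cofactor sub_cpm -signr_odd oddD addbb expr0 mul1r.
  have sP : size P = n.-1.+1 by rewrite PE size_char_poly.
  have Pn : P`_n.-1 = 1.
    by have := monicP (char_poly_monic (row' i (col' i A))); rewrite /lead_coef -PE sP.
  rewrite /count_nonconst sP -addn1 iotaD count_cat /= Pn nonconst1 /= -[RHS]addn0; congr (_ + _)%N.
  apply: count_iota_all => k /andP[_ kn]; rewrite add0n in kn.
  apply: (nonconst_eval (v0:=v0) (v:=tval i (tpar (hsc i)) 0)).
    by rewrite /P eval_coef_adj A0 adj_X eqxx coefXn ltn_eqF.
  rewrite /P eval_coef_adj tree if_same.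
  have := adj_tmx (hpar i) (hgt_r (hsc i)) i; rewrite hgt_r expr0 mulr1 => ->.
  by rewrite coefX1_neq0 // ltnW.
- move=> L ij [[p [sp pp lp]] pmin].
  rewrite io_adj; set P := \adj (char_poly_mx A) i j.
  have hA : forall l m, l != m -> ~~ e m l -> A l m = 0.
    by move=> l m lm em; rewrite /A mxE (negbTE lm) (negbTE em).
  have hz : forall d, (n <= d + L)%N -> P`_d = 0.
    move=> d hd; rewrite /P; apply: (adj_coef0 hA) => q qq lq.
    by apply: leq_trans hd _; rewrite leq_add2l; apply: pmin.
  have hj : (hgt (hsc i) j <= L)%N by rewrite -sp; apply: hgt_min.
  have hnz : forall d, (d < n - L)%N -> nonconst P`_d.
    move=> d dn.
    apply: (nonconst_eval (v0:=v0) (v:=tval i (tpar (hsc i)) 0)).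
      have ji : (i == j) = false by apply/eqP.
      by rewrite /P eval_coef_adj A0 adj_X ji coef0.
    rewrite /P eval_coef_adj tree if_same.
    have := adj_tmx (hpar i) (hgt_r (hsc i)) j.
    set h := hgt (hsc i) j.
    have hn : (h <= n.-1)%N by lia.
    rewrite -(subnK hn) exprD => /(mulIf (nzX1 h)) ->.
    rewrite coefX1_neq0 //; lia.
  rewrite /count_nonconst.
  have sP : size P = (n - L)%N.
    case: (posnP (n - L)) => [nL|nL].
      apply/eqP; rewrite nL size_poly_eq0; apply/eqP/polyP => d; rewrite coef0 hz //; lia.
    apply/eqP; rewrite eqn_leq; apply/andP; split.
      by apply/leq_sizeP => d hd; apply: hz; lia.
    rewrite leqNgt; apply/negP => hs.
    have : nonconst P`_(n - L).-1 by apply: hnz; lia.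
    by rewrite nth_default ?nonconst0 // -ltnS prednK.
  by rewrite sP; apply: count_iota_all => d /andP[_ dn]; apply: hnz; lia.
Qed.
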